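(* Let $C\in\mathbb{R}^{p\times p}$ be positive definite, $w\in\mathbb{R}^p$, $\mu>0$. For $\tau>0$ let $\hat u_\tau\in(-\mu,\mu)^p$ be the unique real solution of $(\mu^2-u_j^2)[C^{-1}(w-u)]_j-u_j/\tau=0$, let $D_\tau$ be the diagonal matrix with $(D_\tau)_{jj}=\tau(\mu^2-\hat u_{\tau,j}^2)^2/(\mu^2+\hat u_{\tau,j}^2)$, and let $$E_\tau=\tau D_\tau(C+D_\tau)^{-1}C=\frac\tau2\bigl[D_\tau(C+D_\tau)^{-1}C+C(C+D_\tau)^{-1}D_\tau\bigr].$$ With $\hat u=\lim_{\tau\to\infty}\hat u_\tau$, $\hat x=C^{-1}(w-\hat u)$, $I=\{j:\hat x_j\neq0\}$ and $I^c=\{1,\dots,p\}\setminus I$, assume there are no transition coordinates, i.e. $|\hat u_j|<\mu$ for all $j\in I^c$. Then as $\tau\to\infty$, $$(E_\tau)_{ij}=\begin{cases}O(\tau) & i,j\in I^c,\\ O(1) & \text{otherwise.}\end{cases}$$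
   Context: Standing facts: $\hat u_\tau\to\hat u$, where $\hat u$ is the unique minimizer of $(w-u)^TC^{-1}(w-u)$ over $\{|u_j|\le\mu\ \forall j\}$, and $\hat x=C^{-1}(w-\hat u)$ is the unique minimizer of $H(x)=x^TCx-2w^Tx+2\mu\|x\|_1$; also $\hat x_\tau:=C^{-1}(w-\hat u_\tau)\to\hat x$. For $j\in I$ one has $|\hat u_j|=\mu$. *)

(* Defs.v *)
From HB Require Import structures.
From mathcomp Require Import all_boot all_order all_algebra.
Set Implicit Arguments. Unset Strict Implicit. Unset Printing Implicit Defensive.
Import Order.TTheory GRing.Theory Num.Theory.
Local Open Scope ring_scope.

Definition posdef (R : realFieldType) (p : nat) (C : 'M[R]_p) : Prop :=
  C^T = C /\ forall v : 'cV[R]_p, v != 0 -> 0 < (v^T *m C *m v) 0 0.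

Definition xvec (R : realFieldType) (p : nat) (C : 'M[R]_p) (w u : 'cV[R]_p)
  : 'cV[R]_p := invmx C *m (w - u).

Definition solves_eq (R : realFieldType) (p : nat) (C : 'M[R]_p) (w : 'cV[R]_p)
  (mu tau : R) (u : 'cV[R]_p) : Prop :=
  forall j : 'I_p, `|u j 0| < mu /\
    (mu ^+ 2 - u j 0 ^+ 2) * xvec C w u j 0 - u j 0 / tau = 0.

Definition Dmat (R : realFieldType) (p : nat) (mu tau : R) (u : 'cV[R]_p)
  : 'M[R]_p :=
  diag_mx (\row_j (tau * (mu ^+ 2 - u j 0 ^+ 2) ^+ 2 / (mu ^+ 2 + u j 0 ^+ 2))).

Definition Emat (R : realFieldType) (p : nat) (C : 'M[R]_p) (mu tau : R)
  (u : 'cV[R]_p) : 'M[R]_p :=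
  let D := Dmat mu tau u in tau *: (D *m invmx (C + D) *m C).

Definition conv_infty (R : realFieldType) (p : nat) (u : R -> 'cV[R]_p)
  (uhat : 'cV[R]_p) : Prop :=
  forall eps : R, 0 < eps -> exists T : R, forall tau : R, T <= tau ->
    forall j : 'I_p, `|u tau j 0 - uhat j 0| < eps.

(* Main.v *)
Require Import Defs.
From HB Require Import structures.
From mathcomp Require Import all_boot all_order all_algebra.
From mathcomp Require Import ring lra.
Import Order.TTheory GRing.Theory Num.Theory.
Set Implicit Arguments. Unset Strict Implicit. Unset Printing Implicit Defensive.
Local Open Scope ring_scope.

Section Helpers.
Variable R : rcfType.

Definition form (p : nat) (A : 'M[R]_p) (x y : 'cV[R]_p) : R := (x^T *m A *m y) 0 0.
Definition nrm (m n : nat) (M : 'M[R]_(m, n)) : R := \sum_i \sum_j `|M i j|.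

Lemma nrm_ge0 m n (M : 'M[R]_(m,n)) : 0 <= nrm M.
Proof. by apply: sumr_ge0 => i _; apply: sumr_ge0 => j _. Qed.

Lemma row_le_nrm m n (M : 'M[R]_(m,n)) i : \sum_j `|M i j| <= nrm M.
Proof.
rewrite /nrm (bigD1 i) //= lerDl; apply: sumr_ge0 => k _; apply: sumr_ge0 => j _ //.
Qed.

Lemma entry_le_nrm m n (M : 'M[R]_(m,n)) i j : `|M i j| <= nrm M.
Proof.
apply: le_trans (row_le_nrm M i).
rewrite (bigD1 j) //= lerDl; apply: sumr_ge0 => k _ //.
Qed.

Lemma nrm_mul m n q (M : 'M[R]_(m,n)) (N : 'M[R]_(n,q)) : nrm (M *m N) <= nrm M * nrm N.
Proof.
rewrite /nrm mulr_suml.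
apply: ler_sum => i _.
apply: le_trans (_ : \sum_j \sum_k `|M i k| * `|N k j| <= _).
  apply: ler_sum => j _; rewrite mxE; apply: le_trans (ler_norm_sum _ _ _) _.
  by apply: ler_sum => k _; rewrite normrM.
rewrite exchange_big /= mulr_suml; apply: ler_sum => k _.
rewrite -mulr_sumr; apply: ler_wpM2l => //.
exact: (row_le_nrm N k).
Qed.

Lemma mul_delta_c m n (M : 'M[R]_(m,n)) i j : (M *m (delta_mx j (0:'I_1) : 'M_(n,1))) i 0 = M i j.
Proof. by rewrite -colE mxE. Qed.

Lemma mul_delta_r m n (M : 'M[R]_(m,n)) i j : ((delta_mx (0:'I_1) i : 'M_(1,m)) *m M) 0 j = M i j.
Proof. by rewrite -rowE mxE. Qed.

Lemma form_sym p (A : 'M[R]_p) x y : A^T = A -> form A x y = form A y x.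
Proof.
move=> hA; rewrite /form -[in LHS](trmxK (x^T *m A *m y)) [in LHS]mxE.
by rewrite !trmx_mul trmxK hA mulmxA.
Qed.

Lemma e00D (a b : 'M[R]_1) : (a + b) 0 0 = a 0 0 + b 0 0.
Proof. by rewrite mxE. Qed.
Lemma e00Z (a : 'M[R]_1) s : (s *: a) 0 0 = s * a 0 0.
Proof. by rewrite mxE. Qed.

Lemma form_exp p (A : 'M[R]_p) x y s : A^T = A ->
  form A (y + s *: x) (y + s *: x) = form A y y + 2 * s * form A x y + s ^+ 2 * form A x x.
Proof.
move=> hA.
have -> : form A (y + s *: x) (y + s *: x) =
   form A y y + s * form A y x + s * form A x y + s * s * form A x x.
  rewrite /form !raddfD /= !linearZ /=.
  rewrite !mulmxDl -!scalemxAl !e00D !e00Z !e00D !e00Z; ring.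
rewrite [form A y x]form_sym //; ring.
Qed.


Lemma pd_unit p (A : 'M[R]_p) : (forall v, v != 0 -> 0 < form A v v) -> A \in unitmx.
Proof.
move=> hA; rewrite -row_free_unit; apply/negPn/negP => hnf.
have hk : kermx A != 0 by rewrite kermx_eq0.
have [i hi] : exists i, row i (kermx A) != 0.
  apply/existsP; rewrite -negb_forall; apply: contra hk => /forallP h.
  by apply/eqP/row_matrixP => i; rewrite row0; apply/eqP.
have hv : (row i (kermx A))^T != 0 by rewrite trmx_eq0.
have := hA _ hv; rewrite /form trmxK -row_mul mulmx_ker row0 mul0mx mxE.
by rewrite ltxx.
Qed.

Lemma form_ge0 p (A : 'M[R]_p) v : (forall v, v != 0 -> 0 < form A v v) -> 0 <= form A v v.
Proof.
move=> hA; have [->|hv] := eqVneq v 0; last by apply: ltW; apply: hA.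
by rewrite /form trmx0 !mul0mx mxE.
Qed.

Lemma form_CS p (A : 'M[R]_p) x y : A^T = A -> (forall v, v != 0 -> 0 < form A v v) ->
  form A x y ^+ 2 <= form A x x * form A y y.
Proof.
move=> hs hA.
have [->|hx] := eqVneq x 0.
  by rewrite /form trmx0 !mul0mx !mxE expr0n /= mul0r.
have ha := hA _ hx.
have := form_ge0 (y + (- (form A x y / form A x x)) *: x) hA.
rewrite form_exp // => h.
have e : form A y y + 2 * - (form A x y / form A x x) * form A x y +
      (- (form A x y / form A x x)) ^+ 2 * form A x x
      = form A y y - form A x y ^+ 2 / form A x x.
  by field; rewrite gt_eqF.
move: h; rewrite e subr_ge0 ler_pdivrMr // mulrC => h; exact: h.
Qed.

Lemma formD p (A D : 'M[R]_p) x y : form (A + D) x y = form A x y + form D x y.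
Proof. by rewrite /form mulmxDr mulmxDl mxE. Qed.

Lemma form_diag_ge0 p (d : 'rV[R]_p) y : (forall i, 0 <= d 0 i) -> 0 <= form (diag_mx d) y y.
Proof.
move=> hd; rewrite /form mul_mx_diag mxE; apply: sumr_ge0 => j _.
rewrite !mxE; have := hd j; nra.
Qed.


Lemma diag_le_sum p (B : 'M[R]_p) k : B k k <= \sum_i `|B i i|.
Proof.
apply: le_trans (ler_norm _) _.
rewrite (bigD1 k) //= lerDl; apply: sumr_ge0 => i _ //.
Qed.

Lemma inv_bound p (C : 'M[R]_p) (d : 'rV[R]_p) : C^T = C ->
  (forall v, v != 0 -> 0 < form C v v) -> (forall i, 0 <= d 0 i) ->
  forall k j, `|invmx (C + diag_mx d) k j| <= \sum_i `|invmx C i i|.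
Proof.
move=> hs hC hd k j.
set A := C + diag_mx d.
have hA : forall v, v != 0 -> 0 < form A v v.
  move=> v hv; rewrite formD; apply: ltr_wpDr; [exact: form_diag_ge0 | exact: hC].
have hAu := pd_unit hA; have hCu := pd_unit hC.
set B := invmx C.
have hB : B^T = B by rewrite /B trmx_inv hs.
have inner : forall (k : 'I_p) (y : 'cV[R]_p),
    form C (B *m (delta_mx k (0:'I_1) : 'M_(p,1))) y = y k 0.
  move=> k' y; rewrite /form trmx_mul hB trmx_delta -(mulmxA _ B C) mulVmx //.
  by rewrite mulmx1 mul_delta_r.
set y := invmx A *m (delta_mx j (0:'I_1) : 'M_(p,1)).
have yk : forall k, y k 0 = invmx A k j by move=> k'; rewrite mul_delta_c.
have qA : form A y y = y j 0.
  rewrite /form -mulmxA /y (mulmxA A) mulmxV // mul1mx.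
  by rewrite mul_delta_c mxE.
have qC : form C y y <= y j 0.
  rewrite -qA /A formD lerDl; exact: form_diag_ge0.
have yj0 : 0 <= y j 0 by rewrite -qA; exact: form_ge0.
have Bkk0 : forall k, 0 <= B k k.
  move=> k2; have := form_ge0 (B *m (delta_mx k2 (0:'I_1) : 'M_(p,1))) hC.
  by rewrite inner mul_delta_c.
have cs : forall k, y k 0 ^+ 2 <= B k k * y j 0.
  move=> k'; have := form_CS (B *m (delta_mx k' (0:'I_1) : 'M_(p,1))) y hs hC.
  rewrite !inner !mul_delta_c => h; apply: le_trans h _.
  rewrite -yk; apply: ler_wpM2l; [exact: Bkk0 | exact: qC].
have hyj : y j 0 <= B j j.
  have := cs j; have := Bkk0 j; nra.
have b1 := diag_le_sum B k; have b2 := diag_le_sum B j.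
have := cs k; have := Bkk0 k; have := Bkk0 j.
rewrite -yk ler_norml => h1 h2 h3; apply/andP; split; nra.
Qed.


Lemma pd_plus_diag p (C : 'M[R]_p) (d : 'rV[R]_p) :
  (forall v, v != 0 -> 0 < form C v v) -> (forall i, 0 <= d 0 i) ->
  forall v, v != 0 -> 0 < form (C + diag_mx d) v v.
Proof.
move=> hC hd v hv; rewrite formD; apply: ltr_wpDr; [exact: form_diag_ge0 | exact: hC].
Qed.

Lemma ident1 p (C D : 'M[R]_p) : (C + D) \in unitmx ->
  D *m invmx (C + D) *m C = C - C *m invmx (C + D) *m C.
Proof.
move=> hu; set A := C + D.
have -> : D = A - C by rewrite /A addrC addKr.
by rewrite !mulmxBl mulmxV // mul1mx.
Qed.

Lemma ident2 p (C D : 'M[R]_p) : (C + D) \in unitmx ->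
  C *m invmx (C + D) *m D = C - C *m invmx (C + D) *m C.
Proof.
move=> hu; set A := C + D.
have -> : D = A - C by rewrite /A addrC addKr.
by rewrite -mulmxA !mulmxBr mulVmx // mulmx1 mulmxA.
Qed.

End Helpers.

Theorem proposition1 (R : rcfType) (p : nat) (C : 'M[R]_p) (w : 'cV[R]_p)
  (mu : R) (u : R -> 'cV[R]_p) (uhat : 'cV[R]_p) :
  posdef C -> 0 < mu ->
  (forall tau : R, 0 < tau -> solves_eq C w mu tau (u tau)) ->
  conv_infty u uhat ->
  (* no transition coordinates: |uhat_j| < mu for j in I^c *)
  (forall j : 'I_p, xvec C w uhat j 0 = 0 -> `|uhat j 0| < mu) ->
  exists K T : R, forall tau : R, 0 < tau -> T <= tau ->
    forall i j : 'I_p,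
      `|Emat C mu tau (u tau) i j|
        <= K * (if (xvec C w uhat i 0 == 0) && (xvec C w uhat j 0 == 0)
                then tau else 1).
Proof.
move=> [hs hpos] hmu hsol hconv _.
have hC : forall v, v != 0 -> 0 < form C v v := hpos.
have hCu := pd_unit hC.
set B := invmx C.
set xh := xvec C w uhat.
set S := nrm B.
have S0 : 0 <= S := nrm_ge0 B.
pose eps (i : 'I_p) := if xh i 0 == 0 then 1 else `|xh i 0| / (2 * (1 + S)).
have eps0 : forall i, 0 < eps i.
  move=> i; rewrite /eps; case: ifP => // /negbT hx.
  apply: divr_gt0; first by rewrite normr_gt0.
  apply: mulr_gt0 => //; apply: ltr_wpDr => //.
have [Tf hTf] : exists Tf : 'I_p -> R, forall i tau, Tf i <= tau ->
    forall j, `|u tau j 0 - uhat j 0| < eps i.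
  apply: (fin_all_exists (P := fun i (T : R) => forall tau, T <= tau ->
    forall j, `|u tau j 0 - uhat j 0| < eps i)) => i.
  exact: hconv (eps i) (eps0 i).
set T := 1 + \sum_i `|Tf i|.
have hTi : forall i, Tf i <= T.
  move=> i; apply: le_trans (ler_norm _) _.
  rewrite /T (bigD1 i) //= addrCA lerDl; apply: addr_ge0 => //.
  by apply: sumr_ge0 => k _.
set beta := \sum_i `|B i i|.
have beta0 : 0 <= beta by apply: sumr_ge0 => k _.
set Na := beta *+ p *+ p.
have Na0 : 0 <= Na by rewrite /Na !mulrn_wge0.
set nc := nrm C.
have nc0 : 0 <= nc := nrm_ge0 C.
set delta := \sum_i (if xh i 0 == 0 then 0 else 4 / xh i 0 ^+ 2).
have delta_i : forall i, xh i 0 != 0 -> 4 / xh i 0 ^+ 2 <= delta.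
  move=> i hi; rewrite /delta (bigD1 i) //= (negbTE hi) lerDl.
  apply: sumr_ge0 => k _; case: ifP => // _.
  by apply: divr_ge0 => //; apply: sqr_ge0.
have delta0 : 0 <= delta.
  apply: sumr_ge0 => k _; case: ifP => // _.
  by apply: divr_ge0 => //; apply: sqr_ge0.
exists (nc + nc * Na * nc + delta * Na * nc), T.
move=> tau htau hT i j.
set U := u tau.
have hsolU := hsol tau htau.
set dr := \row_k (tau * (mu ^+ 2 - U k 0 ^+ 2) ^+ 2 / (mu ^+ 2 + U k 0 ^+ 2)).
have dr0 : forall k, 0 <= dr 0 k.
  move=> k; rewrite mxE; apply: divr_ge0.
    by apply: mulr_ge0; [exact: ltW | exact: sqr_ge0].
  by apply: addr_ge0; exact: sqr_ge0.
set A := C + diag_mx dr.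
have hAu : A \in unitmx := pd_unit (pd_plus_diag hC dr0).
have nA : nrm (invmx A) <= Na.
  rewrite /nrm /Na; apply: (@le_trans _ _ (\sum_(k < p) \sum_(l < p) beta)).
    apply: ler_sum => k _; apply: ler_sum => l _; exact: inv_bound.
  by rewrite sumr_const card_ord sumr_const card_ord.
have hE : Emat C mu tau U = tau *: (diag_mx dr *m invmx A *m C) by [].
have nAC : nrm (invmx A *m C) <= Na * nc.
  apply: le_trans (nrm_mul _ _) _; exact: ler_wpM2r.
have nCA : nrm (C *m invmx A) <= nc * Na.
  apply: le_trans (nrm_mul _ _) _; exact: ler_wpM2l.
have nCAC : nrm (C *m invmx A *m C) <= nc * Na * nc.
  apply: le_trans (nrm_mul _ _) _; exact: ler_wpM2r.
have hdi : forall k, xh k 0 != 0 -> tau * dr 0 k <= delta.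
  move=> k hk; apply: le_trans (delta_i k hk).
  have [_ heq] := hsolU k.
  set x := xvec C w U k 0 in heq *.
  set a := mu ^+ 2 - U k 0 ^+ 2 in heq *.
  have hsx : tau * a * x = U k 0.
    move/eqP: heq; rewrite subr_eq0 => /eqP heq.
    by rewrite -mulrA heq mulrC divfK // gt_eqF.
  have hdiff : x - xh k 0 = \sum_l B k l * (uhat l 0 - U l 0).
    rewrite /x /xh /xvec -/B.
    have -> : (B *m (w - U)) k 0 - (B *m (w - uhat)) k 0 = (B *m (w - U) - B *m (w - uhat)) k 0.
      by rewrite !mxE.
    rewrite -mulmxBr opprB addrC addrA subrK mxE.
    by apply: eq_bigr => l _; rewrite !mxE.
  have close : `|x - xh k 0| <= S * eps k.
    rewrite hdiff; apply: le_trans (ler_norm_sum _ _ _) _.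
    apply: (@le_trans _ _ (\sum_l `|B k l| * eps k)).
      apply: ler_sum => l _; rewrite normrM; apply: ler_wpM2l => //.
      rewrite distrC; apply: ltW; apply: hTf; exact: le_trans (hTi k) hT.
    rewrite -mulr_suml; apply: ler_wpM2r; first exact: ltW.
    exact: row_le_nrm.
  have half : S * eps k <= `|xh k 0| / 2.
    rewrite /eps (negbTE hk).
    have -> : S * (`|xh k 0| / (2 * (1 + S))) = `|xh k 0| / 2 * (S / (1 + S)).
      by field; rewrite gt_eqF // ltr_wpDr.
    apply: ler_piMr; first by apply: divr_ge0.
    by rewrite ler_pdivrMr ?mul1r ?lerDr // ltr_wpDr.
  have tri := ler_normB x (x - xh k 0).
  rewrite subKr in tri.
  have hx2 : xh k 0 ^+ 2 <= 4 * x ^+ 2.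
    rewrite -(real_normK (num_real (xh k 0))) -(real_normK (num_real x)).
    have := normr_ge0 x; have := normr_ge0 (xh k 0).
    have := le_trans close half; move: tri; nra.
  have hm : 0 < mu ^+ 2 + U k 0 ^+ 2.
    by apply: ltr_pwDl; [exact: exprn_gt0 | exact: sqr_ge0].
  have hxh : 0 < xh k 0 ^+ 2 by rewrite exprn_even_gt0 //.
  have -> : tau * dr 0 k = (tau * a) ^+ 2 / (mu ^+ 2 + U k 0 ^+ 2).
    rewrite mxE /a; field; exact: lt0r_neq0.
  rewrite ler_pdivlMr // mulrAC ler_pdivrMr //.
  have := sqr_ge0 (tau * a).
  have : (tau * a) ^+ 2 * x ^+ 2 = U k 0 ^+ 2 by rewrite -exprMn hsx.
  have := sqr_ge0 (U k 0); have := sqr_ge0 mu.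
  move: hx2; nra.
have K1 : delta * Na * nc <= nc + nc * Na * nc + delta * Na * nc.
  rewrite lerDr; apply: addr_ge0 => //; apply: mulr_ge0 => //; exact: mulr_ge0.
have K1' : delta * (Na * nc) <= nc + nc * Na * nc + delta * Na * nc by rewrite mulrA.
have K2 : delta * (nc * Na) <= nc + nc * Na * nc + delta * Na * nc.
  by rewrite [X in delta * X]mulrC.
have eB : forall (M N : 'M[R]_p) i j, (M - N) i j = M i j - N i j by move=> *; rewrite !mxE.
rewrite hE.
have eZ : forall (M : 'M[R]_p) a i j, (a *: M) i j = a * M i j by move=> *; rewrite mxE.
have eDM : forall (M : 'M[R]_p) i j, (diag_mx dr *m M) i j = dr 0 i * M i j.
  by move=> M i' j'; rewrite mul_diag_mx mxE.
have eMD : forall (M : 'M[R]_p) i j, (M *m diag_mx dr) i j = M i j * dr 0 j.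
  by move=> M i' j'; rewrite mul_mx_diag mxE.
case: (eqVneq (xh i 0) 0) => hi; last first.
  rewrite /= mulr1 -mulmxA eZ eDM mulrA normrM.
  rewrite [`|tau * _|]ger0_norm; last by apply: mulr_ge0 => //; exact: ltW.
  apply: le_trans K1'; apply: ler_pM => //.
  - by apply: mulr_ge0 => //; exact: ltW.
  - exact: hdi.
  - exact: le_trans (entry_le_nrm _ _ _) nAC.
case: (eqVneq (xh j 0) 0) => hj; last first.
  rewrite /= mulr1 ident1 // -ident2 // eZ eMD mulrCA normrM.
  rewrite [`|tau * _|]ger0_norm; last by apply: mulr_ge0 => //; exact: ltW.
  rewrite mulrC; apply: le_trans K2; apply: ler_pM => //.
  - by apply: mulr_ge0 => //; exact: ltW.
  - exact: hdi.
  - exact: le_trans (entry_le_nrm _ _ _) nCA.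
rewrite /= ident1 // eZ eB normrM ger0_norm; last exact: ltW.
rewrite mulrC; apply: ler_wpM2r; first exact: ltW.
apply: le_trans (ler_normB _ _) _.
apply: le_trans (_ : nc + nc * Na * nc <= _); last first.
  by rewrite lerDl; apply: mulr_ge0 => //; apply: mulr_ge0.
apply: lerD; first exact: entry_le_nrm.
exact: le_trans (entry_le_nrm _ _ _) nCAC.
Qed.
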